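(* Let $(X_n)_{n\ge1}$ be i.i.d. random variables in $S$, $X^{(n)}=X_n\cdots X_1$, and let $\mu$ be the law of $Y_1=X_1^*$. Then $\mathbb P\bigl(\bigcup_{n\ge1}[X^{(n)}\in S^\circ]\bigr)>0$ if and only if $\kappa(\mu)<1$.
   Context: $S$ is the semigroup of real $q\times q$ matrices with nonnegative entries such that every row and every column contains a strictly positive entry; $S^\circ$ the subset of matrices with all entries strictly positive. $\|x\|=\sum_i|x_i|$; $\overline B$ is the set of $x\in\mathbb R^q$ with nonnegative entries and $\|x\|=1$. For $g\in S$, $x\in\overline B$, $g\cdot x=gx/\|gx\|$. For $x,y\in\overline B$, $m(x,y)=\min\{x_i/y_i: y_i>0\}$ and $d(x,y)=\frac{1-m(x,y)m(y,x)}{1+m(x,y)m(y,x)}$ (a distance on $\overline B$). $\mu^{(n)}$ is the law of $Y^{(n)}=Y_1\cdots Y_n$, $Y_k=X_k^*$; $c(\mu^{(n)})=\sup\{\int_S \frac{d(g\cdot y,g\cdot y')}{d(y,y')}d\mu^{(n)}(g): y,y'\in\overline B,\ y\ne y'\}$ and $\kappa(\mu)=\lim_n c(\mu^{(n)})^{1/n}=\inf_n c(\mu^{(n)})^{1/n}$. *)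

(* Defs.v *)
From HB Require Import structures.
From mathcomp Require Import all_boot all_order all_algebra.
From mathcomp Require Import all_classical all_reals all_analysis.
Set Implicit Arguments. Unset Strict Implicit. Unset Printing Implicit Defensive.
Import Order.TTheory GRing.Theory Num.Theory.
Local Open Scope classical_set_scope.
Local Open Scope ring_scope.

(* carrier of q x q real matrices, equipped with a point (needed for the
   generated measurable structure below) *)
Definition sqmx (R : realType) (q : nat) : Type := 'M[R]_q.
HB.instance Definition _ (R : realType) q := Choice.on (sqmx R q).
HB.instance Definition _ (R : realType) q := isPointed.Build (sqmx R q) 0%R.

Section Defs.
Variables (R : realType) (q : nat).

Definition inS (g : 'M[R]_q) : Prop :=
  [/\ forall i j, 0 <= g i j,
      forall i, exists j, 0 < g i j &
      forall j, exists i, 0 < g i j].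
Definition inSo (g : 'M[R]_q) : Prop := forall i j, 0 < g i j.

Definition vnorm (x : 'cV[R]_q) : R := \sum_i `|x i 0|.
Definition inBbar (x : 'cV[R]_q) : Prop :=
  (forall i, 0 <= x i 0) /\ vnorm x = 1.

Definition act (g : 'M[R]_q) (x : 'cV[R]_q) : 'cV[R]_q :=
  (vnorm (g *m x))^-1 *: (g *m x).

Definition mxy (x y : 'cV[R]_q) : R :=
  fine (\big[Order.min/+oo%E]_(i | 0 < y i 0) ((x i 0 / y i 0)%:E)).

Definition dist (x y : 'cV[R]_q) : R :=
  (1 - mxy x y * mxy y x) / (1 + mxy x y * mxy y x).

Definition mx_gen : set (set (sqmx R q)) :=
  [set A | exists i j (B : set R), measurable B /\ A = (fun M : sqmx R q => (M : 'M[R]_q) i j) @^-1` B].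
Local Notation Mx := (g_sigma_algebraType mx_gen).

Local Open Scope ereal_scope.

Variables (d : measure_display) (T : measurableType d).

(* (X_n)_{n>=1} i.i.d., with X_{k+1} represented by X k *)
Definition iid (P : probability T R) (X : nat -> T -> Mx) : Prop :=
  (forall n, measurable_fun setT (X n)) /\
  (forall n (B : set Mx), measurable B -> P (X n @^-1` B) = P (X 0%N @^-1` B)) /\
  (forall (I : seq nat) (B : nat -> set Mx), uniq I ->
     (forall i, i \in I -> measurable (B i)) ->
     P (\bigcap_(i in [set` I]) (X i @^-1` B i)) = \prod_(i <- I) P (X i @^-1` B i)).

Fixpoint Xprod (X : nat -> T -> Mx) (n : nat) (w : T) : Mx :=
  match n with
  | 0%N => (1%:M : 'M[R]_q)
  | k.+1 => (X k w : 'M[R]_q) *m (Xprod X k w : 'M[R]_q)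
  end.

Fixpoint Yprod (X : nat -> T -> Mx) (n : nat) (w : T) : Mx :=
  match n with
  | 0%N => (1%:M : 'M[R]_q)
  | k.+1 => (Yprod X k w : 'M[R]_q) *m (X k w : 'M[R]_q)^T
  end.

Definition mun (P : probability T R) (X : nat -> T -> Mx) (n : nat) : set Mx -> \bar R :=
  pushforward P (Yprod X n).

Definition cmu (P : probability T R) (X : nat -> T -> Mx) (n : nat) : \bar R :=
  ereal_sup [set r | exists y y' : 'cV[R]_q,
     [/\ inBbar y, inBbar y', y <> y' &
         r = \int[mun P X n]_(g in setT)
               ((dist (act g y) (act g y') / dist y y')%R)%:E]].

Definition kappa (P : probability T R) (X : nat -> T -> Mx) : \bar R :=
  ereal_inf [set poweR (cmu P X n) (n%:R)^-1 | n in [set n : nat | (0 < n)%N]].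

End Defs.

Notation Mx R q := (g_sigma_algebraType (@mx_gen R q)).

(* Main.v *)
Require Import Defs.
From HB Require Import structures.
From mathcomp Require Import all_boot all_order all_algebra.
From mathcomp Require Import all_classical all_reals all_analysis.
Set Implicit Arguments. Unset Strict Implicit. Unset Printing Implicit Defensive.
Import Order.TTheory GRing.Theory Num.Theory.
Local Open Scope classical_set_scope.
Local Open Scope ring_scope.
From mathcomp Require Import ring lra.

Section Alg.
Variables (R : realType) (q : nat).
Implicit Types (x y : 'cV[R]_q) (g : 'M[R]_q).

Lemma mxyE x y j0 : 0 < y j0 0 -> exists j, [/\ 0 < y j 0, mxy x y = x j 0 / y j 0 &
   forall i, 0 < y i 0 -> mxy x y <= x i 0 / y i 0].
Proof.
move=> yj0; rewrite /mxy (@bigmin_eq_arg _ _ _ +oo%E j0) //=; last first.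
  by move=> i _; rewrite leey.
by case: arg_minP => //= j Pj Hmin; exists j; split => // i Pi; rewrite -lee_fin; exact: Hmin.
Qed.

Lemma vnormE x : (forall i, 0 <= x i 0) -> vnorm x = \sum_i x i 0.
Proof. by move=> h; apply: eq_bigr => i _; rewrite ger0_norm. Qed.

Lemma Bbar_pos x : inBbar x -> exists i, 0 < x i 0.
Proof.
move=> [h1 h2]; apply/not_existsP => H.
have : vnorm x = 0.
  rewrite vnormE // big1 // => i _; apply/eqP; rewrite eq_le h1 andbT.
  by rewrite leNgt; apply/negP => /(H i).
by rewrite h2 => /eqP; rewrite oner_eq0.
Qed.

Lemma Bbar_sum x : inBbar x -> \sum_i x i 0 = 1.
Proof. by move=> [h1 h2]; rewrite -vnormE. Qed.

Lemma mxy_ge0 x y : inBbar x -> inBbar y -> 0 <= mxy x y.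
Proof.
move=> bx by_; have [j0 yj0] := Bbar_pos by_.
have [j [yj -> _]] := mxyE x yj0.
by rewrite divr_ge0 // ?(ltW yj) //; case: bx.
Qed.

Lemma mxy_mul x y i : inBbar x -> inBbar y -> mxy x y * y i 0 <= x i 0.
Proof.
move=> bx by_; have [j0 yj0] := Bbar_pos by_.
have [j [yj _ Hi]] := mxyE x yj0.
have [yi0|] := ltP 0 (y i 0).
  by rewrite -ler_pdivlMr // Hi.
move=> yile; have -> : y i 0 = 0 by apply/eqP; rewrite eq_le yile; case: by_ => ->.
by rewrite mulr0; case: bx.
Qed.

Lemma mxy_le1 x y : inBbar x -> inBbar y -> mxy x y <= 1.
Proof.
move=> bx by_.
have -> : mxy x y = \sum_i mxy x y * y i 0 by rewrite -mulr_sumr Bbar_sum // mulr1.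
rewrite -(Bbar_sum bx); apply: ler_sum => i _; exact: mxy_mul.
Qed.

Lemma dist_ge0 x y : inBbar x -> inBbar y -> 0 <= dist x y.
Proof.
move=> bx by_; rewrite /dist.
have h1 := mxy_ge0 bx by_; have h2 := mxy_ge0 by_ bx.
have h3 := mxy_le1 bx by_; have h4 := mxy_le1 by_ bx.
have hp : 0 <= mxy x y * mxy y x by rewrite mulr_ge0.
have hp1 : mxy x y * mxy y x <= 1 by rewrite -(mulr1 1) ler_pM.
by rewrite divr_ge0 // ?subr_ge0 //; apply: addr_ge0.
Qed.

End Alg.

Lemma final_ineq (R : realType) (m s r P' : R) : 0 <= m <= 1 -> 0 <= s <= 1 -> 0 <= r <= 1 ->
  (m + r * (1 - m)) * (s + r * (1 - s)) <= P' -> P' <= 1 ->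
  (1 - P') / (1 + P') <= (1 - r ^+ 2) * ((1 - m * s) / (1 + m * s)).
Proof.
move=> /andP[m0 m1] /andP[s0 s1] /andP[r0 r1] hQ hP.
set Q := (m + r * (1 - m)) * (s + r * (1 - s)) in hQ.
set P := m * s.
have P0 : 0 <= P by rewrite mulr_ge0.
have hm : m <= m + r * (1 - m) by rewrite lerDl mulr_ge0 // subr_ge0.
have hs : s <= s + r * (1 - s) by rewrite lerDl mulr_ge0 // subr_ge0.
have hPQ : P <= Q by exact: ler_pM.
have PP' : P <= P' := le_trans hPQ hQ.
have hP'0 : 0 < 1 + P' by rewrite ltr_wpDr // (le_trans P0 PP').
have hP0 : 0 < 1 + P by rewrite ltr_wpDr.
have key : 1 - Q <= (1 - r ^+ 2) * (1 - P).
  rewrite -subr_ge0 (_ : _ - _ = r * (1 - r) * ((1 - m) * s + (1 - s) * m)); last first.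
    by rewrite /P /Q; ring.
  apply: mulr_ge0; first by apply: mulr_ge0; rewrite // subr_ge0.
  by apply: addr_ge0; apply: mulr_ge0; rewrite // subr_ge0.
have Q1 : Q <= P' by [].
have e1 : (1 - P') * (1 + P) <= (1 - Q) * (1 + P).
  by rewrite ler_wpM2r ?addr_ge0 // lerB.
have e2 : (1 - Q) * (1 + P) <= (1 - r ^+ 2) * (1 - P) * (1 + P).
  by rewrite ler_wpM2r ?addr_ge0.
have e3 : (1 - r ^+ 2) * (1 - P) * (1 + P) <= (1 - r ^+ 2) * (1 - P) * (1 + P').
  rewrite ler_wpM2l ?lerD2l //.
  apply: mulr_ge0; rewrite subr_ge0; first by rewrite expr_le1.
  by rewrite /P -(mulr1 1) ler_pM.
rewrite mulrA ler_pdivrMr // mulrAC ler_pdivlMr //.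
exact: (le_trans e1 (le_trans e2 e3)).
Qed.

Section Contr.
Variables (R : realType) (q : nat).
Implicit Types (x y : 'cV[R]_q) (g : 'M[R]_q).

Lemma mulmx_entry_ge g x i j : (forall i j, 0 <= g i j) -> (forall j, 0 <= x j 0) ->
  g i j * x j 0 <= (g *m x) i 0.
Proof.
move=> hg hx; rewrite mxE (bigD1 j) //= lerDl sumr_ge0 // => k _.
exact: mulr_ge0.
Qed.

Lemma gx_ge0 g x : inS g -> inBbar x -> forall i, 0 <= (g *m x) i 0.
Proof.
move=> [hg _ _] [hx _] i; rewrite mxE sumr_ge0 // => k _; exact: mulr_ge0.
Qed.

Lemma gx_pos g x : inS g -> inBbar x -> 0 < vnorm (g *m x).
Proof.
move=> Sg bx; have [j xj] := Bbar_pos bx.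
have [_ _ hc] := Sg; have [i gij] := hc j.
rewrite vnormE; last exact: gx_ge0.
rewrite (bigD1 i) //= ltr_wpDr //; first by rewrite sumr_ge0 // => k _; exact: gx_ge0.
apply: (lt_le_trans _ (mulmx_entry_ge i j _ _)); first exact: mulr_gt0.
  by case: Sg.
by case: bx.
Qed.

Lemma act_entry g x i : act g x i 0 = (g *m x) i 0 / vnorm (g *m x).
Proof. by rewrite /act mxE mulrC. Qed.

Lemma act_Bbar g x : inS g -> inBbar x -> inBbar (act g x).
Proof.
move=> Sg bx; have hp := gx_pos Sg bx.
have he : forall i, 0 <= act g x i 0.
  by move=> i; rewrite act_entry divr_ge0 ?(ltW hp) ?gx_ge0.
split => //; rewrite vnormE //.
under eq_bigr do rewrite act_entry.
rewrite -mulr_suml -vnormE ?divff ?gt_eqF //; exact: gx_ge0.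
Qed.


Lemma phi_bound g a b x y : inS g -> 0 <= a -> 0 < b -> (forall i j, a <= g i j) ->
  (forall i j, g i j <= b) -> inBbar x -> inBbar y -> forall i,
  (mxy x y + a / b * (1 - mxy x y)) * (g *m y) i 0 <= (g *m x) i 0.
Proof.
move=> Sg a0 b0 ha hb bx by_ i.
set m := mxy x y.
have m0 : 0 <= m := mxy_ge0 bx by_.
have m1 : m <= 1 := mxy_le1 bx by_.
have h1 : (g *m x) i 0 - m * (g *m y) i 0 = \sum_j g i j * (x j 0 - m * y j 0).
  by rewrite !mxE mulr_sumr -sumrB; apply: eq_bigr => j _; ring.
have h2 : a * (1 - m) <= \sum_j g i j * (x j 0 - m * y j 0).
  have -> : a * (1 - m) = \sum_j a * (x j 0 - m * y j 0).
    by rewrite -mulr_sumr sumrB -mulr_sumr !Bbar_sum // mulr1.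
  apply: ler_sum => j _; apply: ler_wpM2r => //.
  by rewrite subr_ge0; exact: mxy_mul.
have h3 : (g *m y) i 0 <= b.
  rewrite mxE -[b]mulr1 -(Bbar_sum by_) mulr_sumr; apply: ler_sum => j _.
  by apply: ler_wpM2r => //; case: by_.
have h4 : a / b * (1 - m) * (g *m y) i 0 <= a * (1 - m).
  apply: (@le_trans _ _ (a / b * (1 - m) * b)).
    by apply: ler_wpM2l => //; rewrite mulr_ge0 ?divr_ge0 ?subr_ge0 // ltW.
  by rewrite mulrAC divfK ?gt_eqF.
rewrite mulrDl; have := le_trans h4 h2; rewrite -h1; lra.
Qed.

Lemma mxy_act_lb g a b x y : inS g -> 0 <= a -> 0 < b -> (forall i j, a <= g i j) ->
  (forall i j, g i j <= b) -> inBbar x -> inBbar y ->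
  (mxy x y + a / b * (1 - mxy x y)) * (vnorm (g *m y) / vnorm (g *m x))
  <= mxy (act g x) (act g y).
Proof.
move=> Sg a0 b0 ha hb bx by_.
have by' := act_Bbar Sg by_.
have [j0 pj0] := Bbar_pos by'.
have [j [pj -> _]] := mxyE (act g x) pj0.
have Nx := gx_pos Sg bx; have Ny := gx_pos Sg by_.
move: pj; rewrite !act_entry => pj.
have gyj : 0 < (g *m y) j 0.
  by move: pj; rewrite pmulr_lgt0 // invr_gt0.
have -> : (g *m x) j 0 / vnorm (g *m x) / ((g *m y) j 0 / vnorm (g *m y)) =
          (g *m x) j 0 / (g *m y) j 0 * (vnorm (g *m y) / vnorm (g *m x)).
  by field; rewrite !gt_eqF.
apply: ler_wpM2r; first by rewrite divr_ge0 // ltW.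
rewrite ler_pdivlMr //; exact: (phi_bound Sg a0 b0 ha hb bx by_).
Qed.

Lemma contract g a b x y : inS g -> 0 <= a -> 0 < b -> (forall i j, a <= g i j) ->
  (forall i j, g i j <= b) -> inBbar x -> inBbar y ->
  dist (act g x) (act g y) <= (1 - (a / b) ^+ 2) * dist x y.
Proof.
move=> Sg a0 b0 ha hb bx by_.
have [i0 _] := Bbar_pos bx.
have ab : a <= b := le_trans (ha i0 i0) (hb i0 i0).
have r0 : 0 <= a / b by rewrite divr_ge0 // ltW.
have r1 : a / b <= 1 by rewrite ler_pdivrMr // mul1r.
have Nx := gx_pos Sg bx; have Ny := gx_pos Sg by_.
have l1 := mxy_act_lb Sg a0 b0 ha hb bx by_.
have l2 := mxy_act_lb Sg a0 b0 ha hb by_ bx.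
have bx' := act_Bbar Sg bx; have by' := act_Bbar Sg by_.
rewrite /dist; apply: final_ineq.
- by rewrite mxy_ge0 // mxy_le1.
- by rewrite mxy_ge0 // mxy_le1.
- by rewrite r0 r1.
- have -> : (mxy x y + a / b * (1 - mxy x y)) * (mxy y x + a / b * (1 - mxy y x)) =
     ((mxy x y + a / b * (1 - mxy x y)) * (vnorm (g *m y) / vnorm (g *m x))) *
     ((mxy y x + a / b * (1 - mxy y x)) * (vnorm (g *m x) / vnorm (g *m y))).
    by field; rewrite !gt_eqF.
  have hx0 : 0 <= mxy x y + a / b * (1 - mxy x y).
    by apply: addr_ge0; [exact: mxy_ge0|apply: mulr_ge0 => //; rewrite subr_ge0 mxy_le1].
  have hy0 : 0 <= mxy y x + a / b * (1 - mxy y x).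
    by apply: addr_ge0; [exact: mxy_ge0|apply: mulr_ge0 => //; rewrite subr_ge0 mxy_le1].
  apply: ler_pM => //; apply: mulr_ge0 => //; rewrite divr_ge0 // ltW //.
- by rewrite -(mulr1 1) ler_pM ?mxy_ge0 ?mxy_le1.
Qed.

End Contr.

Section Ratio.
Variables (R : realType) (q : nat).
Implicit Types (x y : 'cV[R]_q) (g : 'M[R]_q).

Definition ratio g y y' : R := dist (act g y) (act g y') / dist y y'.

Lemma ratio_ge0 g y y' : inS g -> inBbar y -> inBbar y' -> 0 <= ratio g y y'.
Proof.
move=> Sg b b'; rewrite /ratio divr_ge0 ?dist_ge0 //; exact: act_Bbar.
Qed.

Lemma ratio_bound g a b y y' : inS g -> 0 <= a -> 0 < b -> (forall i j, a <= g i j) ->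
  (forall i j, g i j <= b) -> inBbar y -> inBbar y' -> ratio g y y' <= 1 - (a / b) ^+ 2.
Proof.
move=> Sg a0 b0 ha hb by_ by'.
have [i0 _] := Bbar_pos by_.
have ab : a <= b := le_trans (ha i0 i0) (hb i0 i0).
have r1' : a / b <= 1 by rewrite ler_pdivrMr // mul1r.
have r0 : 0 <= a / b by rewrite divr_ge0 // ltW.
have r1 : (a / b) ^+ 2 <= 1 by rewrite expr_le1.
have c := contract Sg a0 b0 ha hb by_ by'.
rewrite /ratio; have := dist_ge0 by_ by'; rewrite le_eqVlt => /orP[/eqP <-|dp].
  by rewrite invr0 mulr0 subr_ge0.
by rewrite ler_pdivrMr.
Qed.

Lemma entry_le_sum g i j : (forall i j, 0 <= g i j) -> g i j <= \sum_k \sum_l g k l.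
Proof.
move=> h; rewrite (bigD1 i) //= (bigD1 j) //= -addrA lerDl addr_ge0 //.
  by rewrite sumr_ge0.
by rewrite sumr_ge0 // => k _; rewrite sumr_ge0.
Qed.

Lemma ratio_le1 g y y' : inS g -> inBbar y -> inBbar y' -> ratio g y y' <= 1.
Proof.
move=> Sg by_ by'; have hg : forall i j, 0 <= g i j by case: Sg.
have b0 : 0 < \sum_k \sum_l g k l + 1.
  by rewrite ltr_wpDl // sumr_ge0 // => k _; rewrite sumr_ge0.
have := @ratio_bound g 0 _ y y' Sg (lexx 0) b0 hg.
rewrite mul0r expr0n subr0; apply => // i j.
by rewrite (le_trans (entry_le_sum i j hg)) // lerDl.
Qed.

Definition unif : 'cV[R]_q := const_mx (q%:R^-1).
Definition evec (i : 'I_q) : 'cV[R]_q := \col_j (j == i)%:R.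

Lemma unif_Bbar (i : 'I_q) : inBbar unif.
Proof.
have q0 : (0 < q)%N by case: i => /= k; case: q => // n.
split => [j|]; first by rewrite mxE invr_ge0.
rewrite vnormE => [|j]; last by rewrite mxE invr_ge0.
under eq_bigr do rewrite mxE.
by rewrite sumr_const card_ord -[_ *+ q]mulr_natr mulVf // pnatr_eq0 -lt0n.
Qed.

Lemma evec_Bbar i : inBbar (evec i).
Proof.
split => [j|]; first by rewrite mxE ler0n.
rewrite vnormE => [|j]; last by rewrite mxE ler0n.
rewrite (bigD1 i) //= big1 => [|j ji]; rewrite mxE ?eqxx ?addr0 //.
by rewrite (negbTE ji).
Qed.

Lemma dist0_of x y k : inBbar x -> inBbar y -> 0 < y k 0 -> x k 0 = 0 -> dist x y = 1.
Proof.
move=> bx by_ yk xk.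
have [j [_ _ h]] := mxyE x yk.
have m0 : mxy x y = 0.
  by apply/eqP; rewrite eq_le mxy_ge0 // andbT (le_trans (h k yk)) // xk mul0r.
by rewrite /dist m0 mul0r subr0 addr0 divr1.
Qed.

Lemma ratio_one g (i j k : 'I_q) : j != i -> inS g -> g k i <= 0 ->
  ratio g unif (evec i) = 1.
Proof.
move=> ji Sg gki.
have q0 : (0 < q)%N by case: i {ji gki} => /= l; case: q => // n.
have bu := unif_Bbar i; have be := evec_Bbar i.
have d1 : dist unif (evec i) = 1.
  have -> : dist unif (evec i) = dist (evec i) unif.
    by rewrite /dist [mxy unif _ * _]mulrC.
  apply: (dist0_of (k := j)) => //; rewrite !mxE ?(negbTE ji) //.
  by rewrite invr_gt0 ltr0n.
have d2 : dist (act g unif) (act g (evec i)) = 1.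
  have -> : dist (act g unif) (act g (evec i)) = dist (act g (evec i)) (act g unif).
    by rewrite /dist [mxy (act g unif) _ * _]mulrC.
  have gk0 : g k i = 0 by apply/eqP; rewrite eq_le gki; case: Sg => /(_ k i) ->.
  apply: (dist0_of (k := k)); [exact: act_Bbar|exact: act_Bbar| |].
    rewrite act_entry divr_gt0 ?gx_pos //.
    have [_ hr _] := Sg; have [l gkl] := hr k.
    apply: (lt_le_trans _ (mulmx_entry_ge k l _ _)); last by case: bu.
      by rewrite mxE mulr_gt0 // invr_gt0 ltr0n.
    by case: Sg.
  rewrite act_entry mxE (bigD1 i) //= big1 => [|l li]; last by rewrite mxE (negbTE li) mulr0.
  by rewrite mxE eqxx mulr1 addr0 gk0 mul0r.
by rewrite /ratio d1 d2 divr1.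
Qed.

End Ratio.

Section MSets.
Context (d : measure_display) (T : measurableType d) (R : realType).

Lemma mset_lt (f g : T -> R) : measurable_fun setT f -> measurable_fun setT g ->
  measurable [set w | f w < g w].
Proof.
move=> mf mg; have mb := measurable_realfun.measurable_fun_ltr mf mg.
have -> : [set w | f w < g w] = setT `&` (fun x => f x < g x) @^-1` [set true].
  by apply/seteqP; split => w /=; [move=> h; split|case].
exact: mb.
Qed.

Lemma mset_le (f g : T -> R) : measurable_fun setT f -> measurable_fun setT g ->
  measurable [set w | f w <= g w].
Proof.
move=> mf mg; have mb := measurable_realfun.measurable_fun_ler mf mg.
have -> : [set w | f w <= g w] = setT `&` (fun x => f x <= g x) @^-1` [set true].
  by apply/seteqP; split => w /=; [move=> h; split|case].
exact: mb.
Qed.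

Lemma mset_forall (I : finType) (A : I -> set T) : (forall i, measurable (A i)) ->
  measurable [set w | forall i, A i w].
Proof.
move=> mA; have -> : [set w | forall i, A i w] = \bigcap_(i in [set: I]) A i.
  by apply/seteqP; split => w /= h i //; exact: h.
by apply: fin_bigcap_measurable => //; exact: finite_finset.
Qed.

Lemma mset_exists (I : finType) (A : I -> set T) : (forall i, measurable (A i)) ->
  measurable [set w | exists i, A i w].
Proof.
move=> mA; have -> : [set w | exists i, A i w] = \bigcup_(i in [set: I]) A i.
  by apply/seteqP; split => w /= [i h]; exists i.
by apply: fin_bigcup_measurable => //; exact: finite_finset.
Qed.

End MSets.

Section Meas.
Context (R : realType) (q : nat) (d : measure_display) (T : measurableType d).
Variable X : nat -> T -> Mx R q.
Hypothesis mX : forall n, measurable_fun setT (X n).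

Lemma entry_mfun i j : measurable_fun setT (fun M : Mx R q => (M : 'M[R]_q) i j).
Proof.
move=> _ B mB; rewrite setTI; apply: sub_sigma_algebra.
by exists i, j, B.
Qed.

Lemma Xentry_mfun n i j : measurable_fun setT (fun w => (X n w : 'M[R]_q) i j).
Proof. exact: (measurableT_comp (entry_mfun i j) (mX n)). Qed.

Lemma Xprod_entry_mfun n i j : measurable_fun setT (fun w => (Xprod X n w : 'M[R]_q) i j).
Proof.
elim: n i j => [|n IH] i j /=; first exact: measurable_cst.
have -> : (fun w => ((X n w : 'M[R]_q) *m (Xprod X n w : 'M[R]_q)) i j) =
   (fun w => \sum_(k <- index_enum 'I_q) ((X n w : 'M[R]_q) i k * (Xprod X n w : 'M[R]_q) k j)).
  by apply/funext => w; rewrite mxE.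
apply: measurable_sum => k; apply: measurable_realfun.measurable_funM; [exact: Xentry_mfun|exact: IH].
Qed.

Lemma Yprod_tr n w : (Yprod X n w : 'M[R]_q) = (Xprod X n w : 'M[R]_q)^T.
Proof.
elim: n => [|n IH] /=; first by rewrite trmx1.
by rewrite IH trmx_mul.
Qed.

Lemma Yprod_entry_mfun n i j : measurable_fun setT (fun w => (Yprod X n w : 'M[R]_q) i j).
Proof.
have -> : (fun w => (Yprod X n w : 'M[R]_q) i j) = (fun w => (Xprod X n w : 'M[R]_q) j i).
  by apply/funext => w; rewrite Yprod_tr mxE.
exact: Xprod_entry_mfun.
Qed.

Lemma Yprod_mfun n : measurable_fun setT (Yprod X n : T -> Mx R q).
Proof.
apply: (@measurability _ _ T (Mx R q) setT (Yprod X n) (@mx_gen R q)) => //.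
move=> _ [_ [i [j [B [mB ->]]]] <-].
rewrite setTI; have := Yprod_entry_mfun n i j measurableT mB.
by rewrite setTI.
Qed.

End Meas.

Import HBNNSimple.

Section Comp.
Context d d' (T : measurableType d) (U : measurableType d') (R : realType).
Variables (Y : T -> U) (mY : measurable_fun setT Y) (h : {nnsfun U >-> R}).

Definition hY := h \o Y.
Lemma hY_fin : finite_set (range hY).
Proof.
apply: (sub_finite_set _ (@fimfunP _ _ h)) => _ [w _ <-]; by exists (Y w).
Qed.
HB.instance Definition _ := isMeasurableFun.Build _ _ _ _ hY
  (measurableT_comp (measurable_funPT h) mY).
HB.instance Definition _ := FiniteImage.Build _ _ hY hY_fin.
HB.instance Definition _ := isNonNegFun.Build _ _ hY (fun x => fun_ge0 (Y x)).

Local Open Scope ereal_scope.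

Lemma sint_hY_bound (P : probability T R) (A : set T) (mA : measurable A) (c : R)
  (c0 : (0 <= c)%R) : (forall w, h (Y w) + c * \1_A w <= 1)%R ->
  sintegral P (h \o Y) <= 1 - c%:E * P A.
Proof.
move=> hb.
pose g : {nnsfun T >-> R} := add_nnsfun [the {nnsfun T >-> R} of hY]
   (scale_nnsfun (indic_nnsfun R mA) c0).
have le1 : sintegral P g <= sintegral P (cst_nnsfun T (NngNum (@ler01 R))).
  by apply: le_sintegral => w; rewrite /g /= hb.
have e1 : sintegral P (cst_nnsfun T (NngNum (@ler01 R))) = 1.
  rewrite (eq_sintegral (\1_setT)); first by rewrite sintegral_indic; exact: probability_setT.
  by move=> w; rewrite /= indicE in_setT.
have e2 : sintegral P g = sintegral P hY + c%:E * P A.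
  rewrite /g sintegralD; congr (_ + _).
  by rewrite /scale_nnsfun sintegralrM sintegral_indic.
have fin : c%:E * P A \is a fin_num.
  by rewrite fin_numM // fin_num_measure.
rewrite leeBrDr //; rewrite -e2 -e1; exact: le1.
Qed.

End Comp.

Section IntS.
Context (R : realType) (q : nat) (d : measure_display) (T : measurableType d).
Variables (P : probability T R) (Y : T -> Mx R q) (mY : measurable_fun setT Y).
Variables (S : Mx R q -> Prop) (f : Mx R q -> R).
Hypotheses (SY : forall w, S (Y w)) (f0 : forall g, S g -> (0 <= f g)%R).
Local Open Scope ereal_scope.

Lemma int_eq_sup : \int[pushforward P Y]_(g in setT) (f g)%:E =
  ereal_sup [set sintegral (pushforward P Y) h | h in
    [set h : {nnsfun Mx R q >-> R} | forall g, (h g)%:E <= ((fun g => (f g)%:E)^\+ g)]].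
Proof.
rewrite /integral /= patch_setT.
suff -> : ereal_sup [set sintegral (pushforward P Y) h | h in [set h : {nnsfun Mx R q >-> R} |
    (forall x, (h x)%:E <= (fun g => (f g)%:E)^\- x)]] = 0 by rewrite sube0.
apply/eqP; rewrite eq_le; apply/andP; split.
  apply: ge_ereal_sup => _ [h hh <-].
  rewrite (_ : sintegral (pushforward P Y) h = sintegral P (h \o Y)) //.
  rewrite (eq_sintegral (cst 0%R)) ?sintegral0 // => w /=.
  apply/eqP; rewrite eq_le fun_ge0 andbT -lee_fin.
  apply: (le_trans (hh (Y w))); rewrite funenegE /=.
  by rewrite ge_max lexx andbT lee_fin oppr_le0 f0.
apply: ereal_sup_ubound; exists nnsfun0.
  by move=> x /=; rewrite funeneg_ge0.
rewrite (_ : sintegral (pushforward P Y) nnsfun0 = sintegral P (@nnsfun0 _ (Mx R q) R \o Y)) //.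
by rewrite (eq_sintegral (cst 0%R)) ?sintegral0.
Qed.

Lemma int_le (B : \bar R) : (forall h : {nnsfun Mx R q >-> R},
   (forall w, (h (Y w) <= f (Y w))%R) -> sintegral P (h \o Y) <= B) ->
  \int[pushforward P Y]_(g in setT) (f g)%:E <= B.
Proof.
move=> H; rewrite int_eq_sup; apply: ge_ereal_sup => _ [h hh <-].
rewrite (_ : sintegral (pushforward P Y) h = sintegral P (h \o Y)) //.
apply: H => w; have := hh (Y w); rewrite funeposE /= (max_idPl _) ?lee_fin //.
exact: f0.
Qed.

Lemma int_ge (B : \bar R) (h : {nnsfun Mx R q >-> R}) :
  (forall g, (h g)%:E <= ((fun g => (f g)%:E)^\+ g)) -> B <= sintegral P (h \o Y) ->
  B <= \int[pushforward P Y]_(g in setT) (f g)%:E.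
Proof.
move=> hh hB; rewrite int_eq_sup; apply: (le_trans hB).
by apply: ereal_sup_ubound; exists h.
Qed.

Lemma int_ge0 : 0 <= \int[pushforward P Y]_(g in setT) (f g)%:E.
Proof.
apply: (@int_ge _ nnsfun0).
  by move=> g /=; rewrite funepos_ge0.
by rewrite (eq_sintegral (cst 0%R)) ?sintegral0.
Qed.

Lemma int_ge_indic (F : set (Mx R q)) (mF : measurable F) :
  (forall g, F g -> (1 <= f g)%R) ->
  P (Y @^-1` F) <= \int[pushforward P Y]_(g in setT) (f g)%:E.
Proof.
move=> hF; apply: (@int_ge _ (indic_nnsfun R mF)).
  move=> g; have -> : indic_nnsfun R mF g = \1_F g by [].
  rewrite funeposE /= indicE.
  case: (boolP (g \in F)) => [/set_mem Fg|_] /=; last by rewrite le_max lexx orbT.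
  by rewrite le_max lee_fin hF.
by rewrite (eq_sintegral (\1_(Y @^-1` F))) ?sintegral_indic //.
Qed.

End IntS.

Section Comb.
Variables (R : realType) (q : nat).
Implicit Types (A B M : 'M[R]_q) (s t : seq 'M[R]_q).

Definition prodL s : 'M[R]_q := foldl (fun acc M => M *m acc) 1%:M s.

Lemma foldl_mulE s A : foldl (fun acc M => M *m acc) A s = prodL s *m A.
Proof.
elim: s A => [|M s IH] A /=; first by rewrite /prodL /= mul1mx.
have e : prodL (M :: s) = prodL s *m M by rewrite {1}/prodL /= IH mulmx1.
by rewrite /= IH e mulmxA.
Qed.

Lemma prodL_cat s t : prodL (s ++ t) = prodL t *m prodL s.
Proof. by rewrite /prodL foldl_cat foldl_mulE. Qed.

Lemma prodL_rcons s M : prodL (rcons s M) = M *m prodL s.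
Proof. by rewrite -cats1 prodL_cat /prodL /= mulmx1. Qed.

Lemma mul_entry_ge A B i j l : (forall i j, 0 <= A i j) -> (forall i j, 0 <= B i j) ->
  A i l * B l j <= (A *m B) i j.
Proof.
move=> hA hB; rewrite mxE (bigD1 l) //= lerDl sumr_ge0 // => k _.
exact: mulr_ge0.
Qed.

Lemma mul_ge0 A B : (forall i j, 0 <= A i j) -> (forall i j, 0 <= B i j) ->
  forall i j, 0 <= (A *m B) i j.
Proof. by move=> hA hB i j; rewrite mxE sumr_ge0 // => k _; exact: mulr_ge0. Qed.

Lemma inS_mul A B : inS A -> inS B -> inS (A *m B).
Proof.
move=> [hA rA cA] [hB rB cB]; split.
- exact: mul_ge0.
- move=> i; have [l Al] := rA i; have [j Blj] := rB l.
  exists j; exact: (lt_le_trans (mulr_gt0 Al Blj) (mul_entry_ge i j l hA hB)).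
- move=> j; have [l Blj] := cB j; have [i Ail] := cA l.
  exists i; exact: (lt_le_trans (mulr_gt0 Ail Blj) (mul_entry_ge i j l hA hB)).
Qed.

Lemma inS_1 : inS (1%:M : 'M[R]_q).
Proof.
split.
- by move=> i j; rewrite mxE ler0n.
- by move=> i; exists i; rewrite mxE eqxx ltr01.
- by move=> j; exists j; rewrite mxE eqxx ltr01.
Qed.

Lemma inS_tr A : inS A -> inS A^T.
Proof.
move=> [h r c]; split.
- by move=> i j; rewrite mxE.
- by move=> i; have [j hj] := c i; exists j; rewrite mxE.
- by move=> j; have [i hi] := r j; exists i; rewrite mxE.
Qed.

Lemma inS_prodL s : (forall M, M \in s -> inS M) -> inS (prodL s).
Proof.
elim/last_ind: s => [|s M IH] h; first exact: inS_1.
rewrite prodL_rcons; apply: inS_mul.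
  by apply: h; rewrite mem_rcons mem_head.
by apply: IH => N hN; apply: h; rewrite mem_rcons in_cons hN orbT.
Qed.

Lemma comb (good : 'M[R]_q -> Prop) :
  (exists i0 : 'I_q, True) ->
  (forall i : 'I_q, exists s, [/\ s != [::], (forall M, M \in s -> good M /\ inS M) &
       forall j, 0 < prodL s i j]) ->
  exists s, [/\ s != [::], (forall M, M \in s -> good M /\ inS M) & inSo (prodL s)].
Proof.
move=> [i0 _] H.
suff : forall k, (k <= q)%N -> exists s, [/\ s != [::], (forall M, M \in s -> good M /\ inS M) &
       forall i : 'I_q, (i < k)%N -> forall j, 0 < prodL s i j].
  move=> /(_ q (leqnn q)) [s [s0 hs hp]]; exists s; split => // i j; exact: hp.
elim => [|k IH] kq.
  have [s [s0 hs _]] := H i0; by exists s; split.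
have [s [s0 hs hp]] := IH (ltnW kq).
have Ss : inS (prodL s) by apply: inS_prodL => M /hs [].
have [_ rS _] := Ss.
have [j Gkj] := rS (Ordinal kq).
have [t [t0 ht htp]] := H j.
have St : inS (prodL t) by apply: inS_prodL => M /ht [].
exists (t ++ s); split.
- by case: t t0 {ht htp St}.
- by move=> M; rewrite mem_cat => /orP[/ht|/hs].
- move=> i; rewrite ltnS leq_eqVlt => /orP[/eqP ik|ik] m; rewrite prodL_cat.
  + have -> : i = Ordinal kq by apply/val_inj.
    apply: (lt_le_trans (mulr_gt0 Gkj (htp m))).
    by apply: mul_entry_ge; [case: Ss|case: St].
  + have [_ _ cT] := St; have [l hl] := cT m.
    apply: (lt_le_trans (mulr_gt0 (hp i ik l) hl)).
    by apply: mul_entry_ge; [case: Ss|case: St].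
Qed.

End Comb.

Section Pat.
Variables (R : realType) (q : nat).
Implicit Types (A B M : 'M[R]_q) (s t : seq 'M[R]_q).

Definition pat M : {ffun 'I_q * 'I_q -> bool} := [ffun ij => 0 < M ij.1 ij.2].

Lemma patP A B : pat A = pat B <-> forall i j, (0 < A i j) = (0 < B i j).
Proof.
split => [h i j|h].
  by have := congr1 (fun f : {ffun _ -> bool} => f (i, j)) h; rewrite !ffunE.
by apply/ffunP => -[i j]; rewrite !ffunE /= h.
Qed.

Lemma pos_mul A B i j : (forall i j, 0 <= A i j) -> (forall i j, 0 <= B i j) ->
  (0 < (A *m B) i j) = [exists l, (0 < A i l) && (0 < B l j)].
Proof.
move=> hA hB; apply/idP/existsP.
  move=> h; apply/existsP; move: h; apply: contraLR => /existsPn hn.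
  rewrite -leNgt mxE; apply: sumr_le0 => l _; have := hn l.
  rewrite negb_and -!leNgt => /orP[] h'.
    have -> : A i l = 0 by apply/eqP; rewrite eq_le h' hA.
    by rewrite mul0r.
  have -> : B l j = 0 by apply/eqP; rewrite eq_le h' hB.
  by rewrite mulr0.
move=> [l /andP[h1 h2]].
exact: (lt_le_trans (mulr_gt0 h1 h2) (mul_entry_ge i j l hA hB)).
Qed.

Lemma pat_mul A B A' B' : inS A -> inS B -> inS A' -> inS B' ->
  pat A = pat A' -> pat B = pat B' -> pat (A *m B) = pat (A' *m B').
Proof.
move=> [hA _ _] [hB _ _] [hA' _ _] [hB' _ _] /patP eA /patP eB; apply/patP => i j.
rewrite !pos_mul //; apply: eq_existsb => l; by rewrite eA eB.
Qed.

Lemma pat_prodL s t : size s = size t ->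
  (forall k, (k < size s)%N -> pat (nth 0 s k) = pat (nth 0 t k)) ->
  (forall M, M \in s -> inS M) -> (forall M, M \in t -> inS M) ->
  pat (prodL s) = pat (prodL t).
Proof.
elim/last_ind: s t => [|s M IH] t.
  by case: t => // _ _ _ _.
case/lastP: t => [|t N]; first by rewrite size_rcons.
rewrite !size_rcons => /eqP; rewrite eqSS => /eqP st hk hs ht.
rewrite !prodL_rcons; apply: pat_mul.
- by apply: hs; rewrite mem_rcons mem_head.
- by apply: inS_prodL => L hL; apply: hs; rewrite mem_rcons in_cons hL orbT.
- by apply: ht; rewrite mem_rcons mem_head.
- by apply: inS_prodL => L hL; apply: ht; rewrite mem_rcons in_cons hL orbT.
- by have := hk (size s); rewrite !nth_rcons ltnn eqxx st ltnn eqxx; apply.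
- apply: IH => //.
  + move=> k ks; have := hk k; rewrite !nth_rcons ks -st ks; apply.
    by rewrite ltnS ltnW.
  + by move=> L hL; apply: hs; rewrite mem_rcons in_cons hL orbT.
  + by move=> L hL; apply: ht; rewrite mem_rcons in_cons hL orbT.
Qed.

End Pat.

Section Negl.
Context (d : measure_display) (T : measurableType d) (R : realType).
Variable (mu : {measure set T -> \bar R}).

Lemma negl_seq (I : eqType) (F : I -> set T) (s : seq I) :
  (forall i, i \in s -> mu.-negligible (F i)) ->
  mu.-negligible [set w | exists2 i, i \in s & F i w].
Proof.
elim: s => [|a s IH] h.
  by apply: (negligibleS _ (negligible_set0 mu)) => w [].
apply: (@negligibleS _ _ _ _ (F a `|` [set w | exists2 i, i \in s & F i w])).
  move=> w [i]; rewrite in_cons => /orP[/eqP ->|iS Fi]; first by left.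
  by right; exists i.
apply: negligibleU; first by apply: h; rewrite mem_head.
by apply: IH => i iS; apply: h; rewrite in_cons iS orbT.
Qed.

Lemma negl_fin (I : finType) (F : I -> set T) :
  (forall i, mu.-negligible (F i)) -> mu.-negligible [set w | exists i, F i w].
Proof.
move=> h; apply: (@negligibleS _ _ _ _ [set w | exists2 i, i \in enum I & F i w]).
  by move=> w [i Fi]; exists i; rewrite ?mem_enum.
by apply: negl_seq => i _; exact: h.
Qed.

Lemma negl_nat (F : nat -> set T) :
  (forall k, mu.-negligible (F k)) -> mu.-negligible [set w | exists k, F k w].
Proof.
move=> h; apply: (@negligibleS _ _ _ _ (\bigcup_k F k)); first by move=> w [k Fk]; exists k.
exact: negligible_bigcup.
Qed.

End Negl.

Section Prob.
Context (R : realType) (q : nat) (d : measure_display) (T : measurableType d).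
Variables (P : probability T R) (X : nat -> T -> Mx R q).
Hypotheses (HS : forall n w, inS (X n w : 'M[R]_q)) (Hiid : iid P X).
Local Open Scope ereal_scope.

Let mX : forall n, measurable_fun setT (X n). Proof. by case: Hiid. Qed.

Definition Bp (p : {ffun 'I_q * 'I_q -> bool}) : set (Mx R q) :=
  [set M | pat (M : 'M[R]_q) = p].

Lemma mBp p : measurable (Bp p).
Proof.
have -> : Bp p = [set M : Mx R q | forall ij : 'I_q * 'I_q,
    (if p ij then (0 < (M : 'M[R]_q) ij.1 ij.2)%R else ((M : 'M[R]_q) ij.1 ij.2 <= 0)%R)].
  apply/seteqP; split => M /=.
    move=> <- ij; rewrite ffunE; case: ifP => //; by rewrite leNgt => ->.
  move=> h; apply/ffunP => ij; rewrite ffunE; have := h ij.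
  by case: (p ij) => // h'; apply/negbTE; rewrite -leNgt.
apply: mset_forall => ij; case: (p ij).
  by apply: mset_lt; [exact: measurable_cst|exact: entry_mfun].
by apply: mset_le; [exact: entry_mfun|exact: measurable_cst].
Qed.

Definition pi p := P (X 0 @^-1` Bp p).

Lemma piX k p : P (X k @^-1` Bp p) = pi p.
Proof. by have [_ [h _]] := Hiid; rewrite h //; exact: mBp. Qed.

Lemma mXB k p : measurable (X k @^-1` Bp p).
Proof. by rewrite -[X in measurable X]setTI; apply: mX => //; exact: mBp. Qed.

Definition good (M : 'M[R]_q) := 0 < pi (pat M).

Definition En n := [set w | inSo (Xprod X n w : 'M[R]_q)].
Definition Rrow (i : 'I_q) n := [set w | forall j, (0 < (Xprod X n w : 'M[R]_q) i j)%R].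

Lemma mEn n : measurable (En n).
Proof.
apply: (mset_forall (A := fun i w => forall j, (0 < (Xprod X n w : 'M[R]_q) i j)%R)) => i.
apply: (mset_forall (A := fun j w => (0 < (Xprod X n w : 'M[R]_q) i j)%R)) => j.
by apply: mset_lt; [exact: measurable_cst|exact: Xprod_entry_mfun].
Qed.

Lemma mRrow i n : measurable (Rrow i n).
Proof.
apply: (mset_forall (A := fun j w => (0 < (Xprod X n w : 'M[R]_q) i j)%R)) => j.
by apply: mset_lt; [exact: measurable_cst|exact: Xprod_entry_mfun].
Qed.

Lemma Xprod_prodL n w : (Xprod X n w : 'M[R]_q) = prodL (mkseq (fun k => (X k w : 'M[R]_q)) n).
Proof. by elim: n => [|n IH] //=; rewrite mkseqS prodL_rcons IH. Qed.


Lemma good_list (i : 'I_q) n : (0 < n)%N -> 0 < P (Rrow i n) ->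
  exists s, [/\ s != [::], (forall M, M \in s -> good M /\ inS M) &
       forall j, (0 < prodL s i j)%R].
Proof.
move=> n0 hP.
pose Bad := [set w | exists kp : 'I_n * {ffun 'I_q * 'I_q -> bool},
   pi kp.2 = 0 /\ Bp kp.2 (X kp.1 w)].
have nB : P.-negligible Bad.
  apply: negl_fin => -[k p] /=.
  case: (pselect (pi p = 0)) => hp.
    apply: (@negligibleS _ _ _ _ (X k @^-1` Bp p)); first by move=> w [].
    by apply/negligibleP; [exact: mXB|rewrite -hp; exact: piX].
  by apply: (negligibleS _ (negligible_set0 P)) => w [].
have : ~ (Rrow i n `<=` Bad).
  move=> sub; have := negligibleS sub nB.
  move/(measure_negligible (mRrow i n)) => h0.
  by move: hP; rewrite h0 ltxx.
move=> /existsNP [w /not_implyP [Rw Bw]].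
exists (mkseq (fun k => (X k w : 'M[R]_q)) n); split.
- by rewrite -size_eq0 size_mkseq -lt0n.
- move=> M /mapP [k]; rewrite mem_iota add0n => /andP[_ kn] ->; split => //.
  rewrite /good lt0e measure_ge0 andbT; apply/negP => /eqP hk; apply: Bw.
  by exists (Ordinal kn, pat (X k w : 'M[R]_q)).
- by move=> j; rewrite -Xprod_prodL; exact: Rw.
Qed.

Definition Rect (s : seq 'M[R]_q) :=
  [set w | forall k : 'I_(size s), pat (X k w : 'M[R]_q) = pat (nth 0%R s k)].

Lemma Rect_eq s : Rect s = \bigcap_(k in [set` iota 0 (size s)])
   (X k @^-1` Bp (pat (nth 0%R s k))).
Proof.
apply/seteqP; split => w /=.
  move=> h k /= kin; have ks : (k < size s)%N by move: kin; rewrite mem_iota add0n.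
  exact: (h (Ordinal ks)).
by move=> h k; apply: h => /=; rewrite mem_iota add0n ltn_ord.
Qed.

Lemma mRect s : measurable (Rect s).
Proof.
rewrite Rect_eq; apply: fin_bigcap_measurable.
  exact: finite_seq.
by move=> k _; exact: mXB.
Qed.

Lemma P_Rect s : (forall M, M \in s -> good M) -> 0 < P (Rect s).
Proof.
move=> hg; rewrite Rect_eq; have [_ [_ h]] := Hiid.
rewrite h ?iota_uniq //; last by move=> k _; exact: mBp.
rewrite big_seq; apply: (big_ind (fun x => 0 < x)) => //.
  by move=> x y x0 y0; rewrite mule_gt0.
move=> k; rewrite mem_iota add0n /= => ks; rewrite piX.
by apply: hg; rewrite mem_nth.
Qed.

Lemma Rect_En s : inSo (prodL s) -> (forall M, M \in s -> inS M) ->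
  Rect s `<=` En (size s).
Proof.
move=> hp hs w hw; rewrite /En /=.
have e : pat (Xprod X (size s) w : 'M[R]_q) = pat (prodL s).
  rewrite Xprod_prodL; apply: pat_prodL.
  - by rewrite size_mkseq.
  - by move=> k; rewrite size_mkseq => ks; rewrite nth_mkseq //; exact: (hw (Ordinal ks)).
  - by move=> M /mapP [k _ ->].
  - exact: hs.
by move=> i j; move/patP : e => ->; exact: hp.
Qed.

Definition Uall := \bigcup_(n in [set n : nat | (0 < n)%N]) En n.

Lemma mUall : measurable Uall.
Proof. by apply: bigcup_measurable => k _; exact: mEn. Qed.

Lemma null_row : (0 < q)%N -> P Uall = 0 -> forall n, (0 < n)%N ->
  exists i, P (Rrow i n) = 0.
Proof.
move=> q0 hU n n0; apply: contrapT => /forallNP hn.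
have hl : forall i : 'I_q, exists s, [/\ s != [::],
     (forall M, M \in s -> good M /\ inS M) & forall j, (0 < prodL s i j)%R].
  move=> i; apply: (@good_list i n n0); rewrite lt0e measure_ge0 andbT.
  by apply/negP => /eqP; exact: hn.
have [s [s0 hs hp]] := comb (ex_intro _ (Ordinal q0) I) hl.
have hR := P_Rect (fun M hM => proj1 (hs M hM)).
have sub : Rect s `<=` Uall.
  move=> w hw; exists (size s); first by rewrite /= lt0n size_eq0.
  by apply: (Rect_En hp) => // M /hs [].
have h : P (Rect s) <= P Uall by exact: (le_measure P (mem_set (mRect s)) (mem_set mUall) sub).
by move: h; rewrite hU leNgt hR.
Qed.

End Prob.

Lemma powR_lt1' (R : realType) (x r : R) : 0 <= x < 1 -> 0 < r -> powR x r < 1.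
Proof.
move=> /andP[x0 x1] r0; rewrite /powR; case: eqP => [_|/eqP xn0].
  by rewrite gt_eqF.
rewrite expR_lt1 pmulr_rlt0 //; apply: ln_lt0; by rewrite x1 andbT lt0r xn0 x0.
Qed.

Lemma powR_ge1' (R : realType) (x r : R) : 1 <= x -> 0 <= r -> 1 <= powR x r.
Proof.
move=> x1 r0; rewrite /powR; case: eqP => [x0|_].
  by move: x1; rewrite x0 ler10.
by rewrite leNgt expR_lt1 -leNgt mulr_ge0 // ln_ge0.
Qed.

Section Misc.
Variables (R : realType) (q : nat).

Lemma mS : measurable [set g : Mx R q | inS (g : 'M[R]_q)].
Proof.
have -> : [set g : Mx R q | inS (g : 'M[R]_q)] =
  [set g : Mx R q | forall i j, (0 <= (g : 'M[R]_q) i j)%R] `&`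
  [set g : Mx R q | forall i, exists j, (0 < (g : 'M[R]_q) i j)%R] `&`
  [set g : Mx R q | forall j, exists i, (0 < (g : 'M[R]_q) i j)%R].
  by apply/seteqP; split => g /=; [case|move=> [[]]].
apply: measurableI; first apply: measurableI.
- apply: mset_forall => i.
  apply: mset_forall => j.
  by apply: mset_le; [exact: measurable_cst|exact: entry_mfun].
- apply: mset_forall => i.
  apply: mset_exists => j.
  by apply: mset_lt; [exact: measurable_cst|exact: entry_mfun].
- apply: mset_forall => j.
  apply: mset_exists => i.
  by apply: mset_lt; [exact: measurable_cst|exact: entry_mfun].
Qed.

Lemma mF (i : 'I_q) : measurable [set g : Mx R q | inS (g : 'M[R]_q) /\ exists k, ((g : 'M[R]_q) k i <= 0)%R].
Proof.
apply: measurableI; first exact: mS.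
apply: mset_exists => k.
by apply: mset_le; [exact: entry_mfun|exact: measurable_cst].
Qed.

Context (d : measure_display) (T : measurableType d) (X : nat -> T -> Mx R q).
Hypothesis HS : forall n w, inS (X n w : 'M[R]_q).

Lemma XS n w : inS (Xprod X n w : 'M[R]_q).
Proof. elim: n => [|n IH] /=; [exact: inS_1|exact: inS_mul]. Qed.

Lemma YS n w : inS (Yprod X n w : 'M[R]_q).
Proof. rewrite Yprod_tr; apply: inS_tr; exact: XS. Qed.

End Misc.

Theorem mainTheorem3 (R : realType) (q : nat) (d : measure_display)
  (T : measurableType d) (P : probability T R) (X : nat -> T -> Mx R q) :
  (forall n w, inS (X n w : 'M[R]_q)) ->
  iid P X ->
  ((0 < P (\bigcup_(n in [set n : nat | (0 < n)%N])
              [set w | inSo (Xprod X n w : 'M[R]_q)]))%E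
   <-> (kappa P X < 1)%E).
Proof.
move=> HS Hiid.
have mX : forall n, measurable_fun setT (X n) by case: Hiid.
have mU : measurable (Uall X) := @mUall _ _ _ _ P X Hiid.
change (\bigcup_(n in [set n : nat | (0 < n)%N]) [set w | inSo (Xprod X n w : 'M[R]_q)])
  with (Uall X).
split.
- move=> hpos.
  have [n [n0 hn]] : exists n, (0 < n)%N /\ (0 < P (En X n))%E.
    apply: contrapT => hno.
    have negl : P.-negligible (Uall X).
      apply: (@negligibleS _ _ _ _ [set w | exists k, [set w | (0 < k)%N /\ En X k w] w]).
        by move=> w [k k0 hw]; exists k.
      apply: negl_nat => k.
      case: (boolP (0 < k)%N) => k0.
        apply: (@negligibleS _ _ _ _ (En X k)); first by move=> w [].
        apply/negligibleP; first exact: (@mEn _ _ _ _ P X Hiid k).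
        apply/eqP; rewrite eq_le measure_ge0 andbT leNgt; apply/negP => hk.
        by apply: hno; exists k.
      by apply: (negligibleS _ (negligible_set0 P)) => w [] //.
    have h0 : P (Uall X) = 0%E by exact: (measure_negligible mU negl).
    by move: hpos; rewrite h0 ltxx.
  pose Y := Yprod X n.
  have mY : measurable_fun setT Y := Yprod_mfun mX n.
  have SY : forall w, inS (Y w : 'M[R]_q) := YS HS n.
  pose A k := [set w | forall i j, ((Y w : 'M[R]_q) i j <= k.+1%:R)%R /\
                                   (1 <= k.+1%:R * (Y w : 'M[R]_q) i j)%R].
  have mA : forall k, measurable (A k).
    move=> k; apply: mset_forall => i; apply: mset_forall => j; apply: measurableI.
      by apply: mset_le; [exact: Yprod_entry_mfun|exact: measurable_cst].
    apply: mset_le; first exact: measurable_cst.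
    by apply: measurable_realfun.measurable_funM; [exact: measurable_cst|exact: Yprod_entry_mfun].
  have cover : En X n `<=` [set w | exists k, A k w].
    move=> w hw.
    pose M := (Y w : 'M[R]_q).
    have Mpos : forall i j, (0 < M i j)%R by move=> i j; rewrite /M /Y Yprod_tr mxE; exact: hw.
    pose Minv := \matrix_(i, j) (M i j)^-1.
    have Mge0 : forall i j, (0 <= M i j)%R by move=> i j; exact: ltW.
    have Miv0 : forall i j, (0 <= Minv i j)%R by move=> i j; rewrite mxE invr_ge0 ltW.
    pose K := (\sum_k \sum_l M k l + \sum_k \sum_l Minv k l)%R.
    have s1 : (0 <= \sum_k \sum_l M k l)%R by rewrite sumr_ge0 // => k _; rewrite sumr_ge0.
    have s2 : (0 <= \sum_k \sum_l Minv k l)%R by rewrite sumr_ge0 // => k _; rewrite sumr_ge0.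
    exists (Num.truncn K) => i j; split.
      apply: (le_trans _ (ltW (truncnS_gt K))).
      by rewrite (le_trans (entry_le_sum i j Mge0)) // /K lerDl.
    rewrite -ler_pdivrMr // div1r.
    have := entry_le_sum i j Miv0; rewrite mxE => h.
    apply: (le_trans h); apply: (le_trans _ (ltW (truncnS_gt K))).
    by rewrite /K lerDr.
  have [k hk] : exists k, (0 < P (A k))%E.
    apply: contrapT => hno.
    have negl : P.-negligible (En X n).
      apply: (negligibleS cover); apply: negl_nat => k; apply/negligibleP; first exact: mA.
      apply/eqP; rewrite eq_le measure_ge0 andbT leNgt; apply/negP => hk.
      by apply: hno; exists k.
    have h0 : P (En X n) = 0%E by exact: (measure_negligible (@mEn _ _ _ _ P X Hiid n) negl).
    by move: hn; rewrite h0 ltxx.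
  pose a : R := (k.+1%:R)^-1; pose b : R := k.+1%:R; pose c : R := (a / b) ^+ 2.
  have a0 : (0 <= a)%R by rewrite invr_ge0 ler0n.
  have b0 : (0 < b)%R by rewrite ltr0n.
  have c0 : (0 < c)%R by rewrite exprn_gt0 // divr_gt0 // invr_gt0 ltr0n.
  have hb : (cmu P X n <= 1 - c%:E * P (A k))%E.
    apply: ge_ereal_sup => _ [y [y' [by_ by' _ ->]]].
    apply: (@int_le _ _ _ _ P Y (fun g => inS (g : 'M[R]_q)) (fun g => ratio g y y') SY
      (fun g Sg => ratio_ge0 Sg by_ by')).
    move=> h hh; apply: (sint_hY_bound mY P (mA k) (ltW c0)) => w.
    rewrite indicE; case: (boolP (w \in A k)) => [/set_mem Aw|_].
      rewrite mulr1.
      have ha : forall i j, (a <= (Y w : 'M[R]_q) i j)%R.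
        by move=> i j; rewrite /a -div1r ler_pdivrMr ?ltr0n // mulrC; exact: (Aw i j).2.
      have hbd : forall i j, ((Y w : 'M[R]_q) i j <= b)%R by move=> i j; exact: (Aw i j).1.
      have := ratio_bound (SY w) a0 b0 ha hbd by_ by'.
      by move=> h2; have := le_trans (hh w) h2; rewrite lerBrDr.
    by rewrite mulr0 addr0; apply: (le_trans (hh w)); exact: ratio_le1.
  have fin : P (A k) \is a fin_num.
    by rewrite ge0_fin_numE ?measure_ge0 // (le_lt_trans (probability_le1 P (mA k))) ?ltry.
  have lt1 : (1 - c%:E * P (A k) < 1)%E.
    move: fin hk; case: (P (A k)) => // x _; rewrite lte_fin => x0.
    by rewrite -EFinM -EFinB lte_fin gtrBl mulr_gt0.
  have cl1 : (cmu P X n < 1)%E := le_lt_trans hb lt1.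
  have cge : cmu P X n = -oo%E \/ (0 <= cmu P X n)%E.
    rewrite /cmu; set Sset := (Z in ereal_sup Z).
    case: (pselect (Sset !=set0)) => [[r hr]|hne].
      right; apply: (le_trans _ (ereal_sup_ubound hr)).
      move: hr => [y [y' [by_ by' _ ->]]].
      exact: (@int_ge0 _ _ _ _ P Y (fun g => inS (g : 'M[R]_q)) (fun g => ratio g y y') SY
        (fun g Sg => ratio_ge0 Sg by_ by')).
    left; have -> : Sset = set0 by apply/seteqP; split => // r hr; apply: hne; exists r.
    exact: ereal_sup0.
  have n0' : (n%:R^-1 : R) != 0 by rewrite invr_eq0 pnatr_eq0 -lt0n.
  have pk : (poweR (cmu P X n) (n%:R)^-1 < 1)%E.
    case: cge => [->|cg0]; first by rewrite poweRNyr.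
    move: cg0 cl1; case: (cmu P X n) => // x.
    rewrite lee_fin lte_fin => x0 x1 /=; rewrite lte_fin.
    by apply: powR_lt1'; rewrite ?x0 ?x1 // invr_gt0 ltr0n.
  apply: le_lt_trans pk; apply: ereal_inf_lbound; by exists n.
- move=> hk; apply: contrapT => hno.
  have hU0 : P (Uall X) = 0%E.
    by apply/eqP; rewrite eq_le measure_ge0 andbT leNgt; exact/negP.
  case: (posnP q) => [q0|qpos].
    have sub : [set: T] `<=` Uall X.
      move=> w _; exists 1%N => //; rewrite /En /= => i.
      by have := ltn_ord i; rewrite {2}q0 ltn0.
    have h : (P [set: T] <= P (Uall X))%E by exact: (le_measure P (mem_set measurableT) (mem_set mU) sub).
    by move: h; rewrite hU0 probability_setT lee_fin ler10.
  have k1 : (1 <= kappa P X)%E.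
    apply: le_ereal_inf_tmp => _ [n n0 <-].
    have [i hi] := null_row HS Hiid qpos hU0 n0.
    have [j ji] : exists j : 'I_q, j != i.
      apply: contrapT => /forallNP hall.
      have eS : Rrow X i n = [set: T].
        apply/seteqP; split => // w _ j.
        have [_ rS _] := XS HS n w; have [j0 hj0] := rS i.
        have e1 : j = i by apply/eqP/negPn/negP; exact: hall.
        have e2 : j0 = i by apply/eqP/negPn/negP; exact: hall.
        by rewrite e1; rewrite e2 in hj0.
      by move: hi; rewrite eS probability_setT => /eqP; rewrite eqe oner_eq0.
    pose Y := Yprod X n.
    have SY : forall w, inS (Y w : 'M[R]_q) := YS HS n.
    have hF : forall g : Mx R q, [set g : Mx R q | inS (g : 'M[R]_q) /\ exists k, ((g : 'M[R]_q) k i <= 0)%R] g ->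
        (1 <= ratio g (unif R q) (evec R i))%R.
      by move=> g [Sg [k gk]]; rewrite (ratio_one ji Sg gk).
    have hP1 := @int_ge_indic _ _ _ _ P Y (fun g => inS (g : 'M[R]_q))
      (fun g => ratio g (unif R q) (evec R i)) SY
      (fun g Sg => ratio_ge0 Sg (@unif_Bbar R q i) (@evec_Bbar R q i)) _ (mF i) hF.
    have eY : Y @^-1` [set g : Mx R q | inS (g : 'M[R]_q) /\ exists k, ((g : 'M[R]_q) k i <= 0)%R]
        = ~` Rrow X i n.
      apply/seteqP; split => w /=.
        move=> [_ [k hk']] hR; have := hR k; rewrite /Y Yprod_tr mxE in hk'.
        by rewrite ltNge hk'.
      move=> hR; split; first exact: SY.
      apply: contrapT => hne; apply: hR => k; rewrite ltNge; apply/negP => hle.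
      by apply: hne; exists k; rewrite /Y Yprod_tr mxE.
    have e1 : P (Y @^-1` [set g : Mx R q | inS (g : 'M[R]_q) /\ exists k, ((g : 'M[R]_q) k i <= 0)%R]) = 1%E.
      by rewrite eY probability_setC ?hi ?sube0 //; exact: (@mRrow _ _ _ _ P X Hiid i n).
    have cm : (1 <= cmu P X n)%E.
      apply: (le_trans _ (ereal_sup_ubound _)); last first.
        exists (unif R q), (evec R i); split; [exact: (@unif_Bbar R q i)|exact: evec_Bbar|idtac|reflexivity].
        move=> e; have := congr1 (fun v : 'cV[R]_q => v j 0) e; rewrite !mxE (negbTE ji).
        move=> h; have : (q%:R^-1 : R) != 0 by rewrite invr_eq0 pnatr_eq0 -lt0n.
        by rewrite h eqxx.
      by rewrite -e1.
    move: cm; case: (cmu P X n) => // [x|].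
      rewrite lee_fin => x1 /=; rewrite lee_fin; apply: powR_ge1' => //.
    by move=> _; rewrite poweRyr ?leey // invr_eq0 pnatr_eq0 -lt0n.
  by move: hk; rewrite ltNge k1.
Qed.
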